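(* Let $H$ be a super-cocommutative Hopf superalgebra, $\underline H=\Delta^{-1}(H_0\otimes H_0)$ and $V_H=P(H)_1$ the space of odd primitive elements. Then $\underline H$ is a cocommutative Hopf subalgebra, $V_H$ is a right $\underline H$-module via $v\triangleleft a=\sum S(a_{(1)})va_{(2)}$, the map $[u,v]=uv+vu$ takes $V_H\times V_H$ into $P(\underline H)$, and with this bilinear map $(\underline H,V_H)$ is a dual Harish-Chandra pair. This construction is functorial, giving a functor from super-cocommutative Hopf superalgebras to dual Harish-Chandra pairs, $H\mapsto(\underline H,V_H)$.
   Context: $\Bbbk$ is a field with $\operatorname{char}\Bbbk\ne2$. A dual Harish-Chandra pair $(J,V)$: $J$ a cocommutative Hopf algebra, $V$ a right $J$-module, bilinear $[\ ,\ ]:V\times V\to P(J)$ (primitives of $J$) with $\sum[u\triangleleft a_{(1)},v\triangleleft a_{(2)}]=\sum S(a_{(1)})[u,v]a_{(2)}$, $[u,v]=[v,u]$, $v\triangleleft[v,v]=0$. A morphism is $(f,g)$ with $f$ a Hopf algebra map, $g$ linear, $g(v\triangleleft a)=g(v)\triangleleft f(a)$, $f([u,v])=[g(u),g(v)]$. *)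

(* Defs.v *)
(* Tensors: an element of W (x) W is represented by a finite list of pairs
   (formal sum of simple tensors).  Two such lists denote the same tensor iff
   they agree under every k-bilinear form W x W -> k (bilinear forms separate
   the points of W (x) W over a field). *)
From HB Require Import structures.
From mathcomp Require Import all_boot all_order all_algebra.
Set Implicit Arguments. Unset Strict Implicit. Unset Printing Implicit Defensive.
Import GRing.Theory.
Local Open Scope ring_scope.

Section Defs.
Variable k : fieldType.

Definition bilinear_form (W : lmodType k) (phi : W -> W -> k) : Prop :=
  (forall a x y z, phi (a *: x + y) z = a * phi x z + phi y z) /\
  (forall a x y z, phi z (a *: x + y) = a * phi z x + phi z y).

Definition tensor_eq (W : lmodType k) (s t : seq (W * W)) : Prop :=
  forall phi, bilinear_form phi ->
    \sum_(p <- s) phi p.1 p.2 = \sum_(p <- t) phi p.1 p.2.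

Definition trilinear_form (W : lmodType k) (phi : W -> W -> W -> k) : Prop :=
  (forall a x y z w, phi (a *: x + y) z w = a * phi x z w + phi y z w) /\
  (forall a x y z w, phi z (a *: x + y) w = a * phi z x w + phi z y w) /\
  (forall a x y z w, phi z w (a *: x + y) = a * phi z w x + phi z w y).

Definition tensor3_eq (W : lmodType k) (s t : seq (W * W * W)) : Prop :=
  forall phi, trilinear_form phi ->
    \sum_(p <- s) phi p.1.1 p.1.2 p.2 = \sum_(p <- t) phi p.1.1 p.1.2 p.2.

(* the tensor lies in A (x) A : it has a representative with entries in A *)
Definition tensor_in (W : lmodType k) (A : W -> Prop) (s : seq (W * W)) :=
  exists2 t, tensor_eq s t & forall p, p \in t -> A p.1 /\ A p.2.

Definition subspace (W : lmodType k) (A : W -> Prop) : Prop :=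
  A 0 /\ forall a x y, A x -> A y -> A (a *: x + y).

Definition subalgebra (W : algType k) (A : W -> Prop) : Prop :=
  subspace A /\ A 1 /\ (forall x y, A x -> A y -> A (x * y)).

(* [tm] is the multiplication of W (x) W used for the compatibility of the
   comultiplication with the product (ordinary or super). *)
Definition flip (W : lmodType k) (s : seq (W * W)) := [seq (p.2, p.1) | p <- s].

Definition tmul (W : algType k) (s t : seq (W * W)) : seq (W * W) :=
  [seq (p.1 * q.1, p.2 * q.2) | p <- s, q <- t].

Definition coalgebra_on (W : algType k) (A : W -> Prop)
    (Delta : W -> seq (W * W)) (eps : W -> k) : Prop :=
  (forall x, A x -> tensor_in A (Delta x)) /\
  (forall a x y, A x -> A y ->
     tensor_eq (Delta (a *: x + y)) ([seq (a *: p.1, p.2) | p <- Delta x] ++ Delta y)) /\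
  (forall a x y, A x -> A y -> eps (a *: x + y) = a * eps x + eps y) /\
  (forall x, A x -> tensor3_eq
     [seq (p.1, q.1, q.2) | p <- Delta x, q <- Delta p.2]
     [seq (q.1, q.2, p.2) | p <- Delta x, q <- Delta p.1]) /\
  (forall x, A x -> \sum_(p <- Delta x) eps p.1 *: p.2 = x) /\
  (forall x, A x -> \sum_(p <- Delta x) eps p.2 *: p.1 = x).

Definition bialgebra_on (W : algType k) (tm : seq (W * W) -> seq (W * W) -> seq (W * W))
    (A : W -> Prop) (Delta : W -> seq (W * W)) (eps : W -> k) : Prop :=
  subalgebra A /\ coalgebra_on A Delta eps /\
  (forall x y, A x -> A y -> tensor_eq (Delta (x * y)) (tm (Delta x) (Delta y))) /\
  tensor_eq (Delta 1) [:: (1, 1)] /\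
  (forall x y, A x -> A y -> eps (x * y) = eps x * eps y) /\
  eps 1 = 1.

Definition hopf_on (W : algType k) (tm : seq (W * W) -> seq (W * W) -> seq (W * W))
    (A : W -> Prop) (Delta : W -> seq (W * W)) (eps : W -> k) (S : W -> W) : Prop :=
  bialgebra_on tm A Delta eps /\
  (forall x, A x -> A (S x)) /\
  (forall a x y, A x -> A y -> S (a *: x + y) = a *: S x + S y) /\
  (forall x, A x -> \sum_(p <- Delta x) S p.1 * p.2 = eps x *: 1) /\
  (forall x, A x -> \sum_(p <- Delta x) p.1 * S p.2 = eps x *: 1).

Definition cocomm_hopf_on (W : algType k) (A : W -> Prop)
    (Delta : W -> seq (W * W)) (eps : W -> k) (S : W -> W) : Prop :=
  hopf_on (@tmul W) A Delta eps S /\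
  (forall x, A x -> tensor_eq (Delta x) (flip (Delta x))).

Definition primitive_on (W : algType k) (A : W -> Prop) (Delta : W -> seq (W * W))
    (x : W) : Prop :=
  A x /\ tensor_eq (Delta x) [:: (x, 1); (1, x)].

(* A Z/2-grading of W: [pr false] and [pr true] are the projections onto
   W_0 and W_1 of the decomposition W = W_0 (+) W_1. *)
Definition grading (W : lmodType k) (pr : bool -> W -> W) : Prop :=
  (forall b a x y, pr b (a *: x + y) = a *: pr b x + pr b y) /\
  (forall b x, pr b (pr b x) = pr b x) /\
  (forall b x, pr b (pr (~~ b) x) = 0) /\
  (forall x, pr false x + pr true x = x).

Definition parities : seq (bool * bool) :=
  [:: (false, false); (false, true); (true, false); (true, true)].

(* product in the super tensor product algebra:
   (a (x) b)(c (x) d) = (-1)^{|b||c|} ac (x) bd *)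
Definition stmul (W : algType k) (pr : bool -> W -> W) (s t : seq (W * W)) :
    seq (W * W) :=
  flatten [seq [seq ((-1) ^+ (ij.1 && ij.2) *: (p.1 * pr ij.2 q.1), pr ij.1 p.2 * q.2)
               | ij <- parities] | p <- s, q <- t].

(* super flip: a (x) b |-> (-1)^{|a||b|} b (x) a *)
Definition sflip (W : lmodType k) (pr : bool -> W -> W) (s : seq (W * W)) :
    seq (W * W) :=
  flatten [seq [seq ((-1) ^+ (ij.1 && ij.2) *: pr ij.2 p.2, pr ij.1 p.1)
               | ij <- parities] | p <- s].

Definition super_hopf (H : algType k) (pr : bool -> H -> H)
    (Delta : H -> seq (H * H)) (eps : H -> k) (S : H -> H) : Prop :=
  grading pr /\
  (forall i j x y, pr (i (+) j) (pr i x * pr j y) = pr i x * pr j y) /\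
  pr false 1 = 1 /\
  hopf_on (stmul pr) (fun _ => True) Delta eps S /\
  (forall i x, tensor_eq (Delta (pr i x))
                 [seq (pr j p.1, pr (i (+) j) p.2) | p <- Delta x, j <- [:: false; true]]) /\
  (forall x, eps (pr true x) = 0) /\
  (forall i x, S (pr i x) = pr i (S x)).

Definition super_cocomm_hopf (H : algType k) (pr : bool -> H -> H)
    (Delta : H -> seq (H * H)) (eps : H -> k) (S : H -> H) : Prop :=
  super_hopf pr Delta eps S /\
  (forall x, tensor_eq (Delta x) (sflip pr (Delta x))).

Definition hopf_morph_on (W W' : algType k) (A : W -> Prop) (A' : W' -> Prop)
    (Delta : W -> seq (W * W)) (Delta' : W' -> seq (W' * W'))
    (eps : W -> k) (eps' : W' -> k) (S : W -> W) (S' : W' -> W') (f : W -> W') : Prop :=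
  (forall x, A x -> A' (f x)) /\
  (forall a x y, A x -> A y -> f (a *: x + y) = a *: f x + f y) /\
  f 1 = 1 /\
  (forall x y, A x -> A y -> f (x * y) = f x * f y) /\
  (forall x, A x -> tensor_eq (Delta' (f x)) [seq (f p.1, f p.2) | p <- Delta x]) /\
  (forall x, A x -> eps' (f x) = eps x) /\
  (forall x, A x -> f (S x) = S' (f x)).

Definition super_hopf_morph (H K : algType k) (prH : bool -> H -> H) (prK : bool -> K -> K)
    (DH : H -> seq (H * H)) (DK : K -> seq (K * K)) (eH : H -> k) (eK : K -> k)
    (SH : H -> H) (SK : K -> K) (f : H -> K) : Prop :=
  hopf_morph_on (fun _ => True) (fun _ => True) DH DK eH eK SH SK f /\
  (forall i x, f (prH i x) = prK i (f x)).

(* J is the cocommutative Hopf algebra carried by the subalgebra A of W;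
   V is a subspace of U; [act] is the right action, [br] the bracket. *)
Definition rmodule_on (W : algType k) (U : lmodType k) (A : W -> Prop) (V : U -> Prop)
    (act : U -> W -> U) : Prop :=
  subspace V /\
  (forall v a, V v -> A a -> V (act v a)) /\
  (forall c u v a, V u -> V v -> A a -> act (c *: u + v) a = c *: act u a + act v a) /\
  (forall c v a b, V v -> A a -> A b -> act v (c *: a + b) = c *: act v a + act v b) /\
  (forall v, V v -> act v 1 = v) /\
  (forall v a b, V v -> A a -> A b -> act v (a * b) = act (act v a) b).

Definition dual_HC_pair (W : algType k) (A : W -> Prop) (Delta : W -> seq (W * W))
    (eps : W -> k) (S : W -> W) (U : lmodType k) (V : U -> Prop)
    (act : U -> W -> U) (br : U -> U -> W) : Prop :=
  cocomm_hopf_on A Delta eps S /\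
  rmodule_on A V act /\
  (forall u v, V u -> V v -> primitive_on A Delta (br u v)) /\
  (forall c u v w, V u -> V v -> V w -> br (c *: u + v) w = c *: br u w + br v w) /\
  (forall c u v w, V u -> V v -> V w -> br w (c *: u + v) = c *: br w u + br w v) /\
  (forall u v a, V u -> V v -> A a ->
     \sum_(p <- Delta a) br (act u p.1) (act v p.2) = \sum_(p <- Delta a) S p.1 * br u v * p.2) /\
  (forall u v, V u -> V v -> br u v = br v u) /\
  (forall v, V v -> act v (br v v) = 0).

Definition dual_HC_morph (W W' : algType k) (A : W -> Prop) (A' : W' -> Prop)
    (Delta : W -> seq (W * W)) (Delta' : W' -> seq (W' * W'))
    (eps : W -> k) (eps' : W' -> k) (S : W -> W) (S' : W' -> W')
    (U U' : lmodType k) (V : U -> Prop) (V' : U' -> Prop)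
    (act : U -> W -> U) (act' : U' -> W' -> U')
    (br : U -> U -> W) (br' : U' -> U' -> W') (f : W -> W') (g : U -> U') : Prop :=
  hopf_morph_on A A' Delta Delta' eps eps' S S' f /\
  (forall v, V v -> V' (g v)) /\
  (forall c u v, V u -> V v -> g (c *: u + v) = c *: g u + g v) /\
  (forall v a, V v -> A a -> g (act v a) = act' (g v) (f a)) /\
  (forall u v, V u -> V v -> f (br u v) = br' (g u) (g v)).

Definition even_part_sub (H : algType k) (pr : bool -> H -> H)
    (Delta : H -> seq (H * H)) : H -> Prop :=
  fun x => tensor_in (fun y => pr false y = y) (Delta x).

Definition odd_prim (H : algType k) (pr : bool -> H -> H)
    (Delta : H -> seq (H * H)) : H -> Prop :=
  fun x => pr true x = x /\ tensor_eq (Delta x) [:: (x, 1); (1, x)].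

Definition adj_act (H : algType k) (Delta : H -> seq (H * H)) (S : H -> H) (v a : H) : H :=
  \sum_(p <- Delta a) S p.1 * v * p.2.

Definition anticomm (H : algType k) (u v : H) : H := u * v + v * u.

End Defs.

(* Main.v *)
Require Import Defs.
From HB Require Import structures.
From mathcomp Require Import all_boot all_order all_algebra ring.
From mathcomp Require boolp classical_sets.
Set Implicit Arguments. Unset Strict Implicit. Unset Printing Implicit Defensive.
Import GRing.Theory.
Local Open Scope ring_scope.

Module SepM.
Import boolp classical_sets.
Section Sep.
Variables (k : fieldType) (Z : lmodType k).
Definition linf (lam : Z -> k) := forall a x y, lam (a *: x + y) = a * lam x + lam y.

Lemma sep_functional (z : Z) : z != 0 -> exists lam, linf lam /\ lam z = 1.
Proof.
move=> nz.
pose P (G : set (Z * k)) :=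
  (forall a p q, G p -> G q -> G (a *: p.1 + q.1, a * p.2 + q.2)) /\
  (forall c, G (0, c) -> c = 0) /\ (forall p, G p -> G (z, 1)).
have [A [[Acl [Afun Az]] maxA]] : exists A, P A /\ forall B, (A `<` B)%classic -> ~ P B.
  apply: Zorn_bigcup => F FP Ftot; split; [|split].
  - move=> a p q [X FX Xp] [Y FY Yq].
    case: (Ftot X Y FX FY) => [XY|YX].
      by exists Y => //; apply: (FP Y FY).1 => //; exact: XY.
    by exists X => //; apply: (FP X FX).1 => //; exact: YX.
  - by move=> c [X FX Xp]; exact: (FP X FX).2.1 Xp.
  - by move=> p [X FX Xp]; exists X => //; exact: (FP X FX).2.2 _ Xp.
have A00 : forall p, A p -> A (0, 0).
  move=> p Ap; have := Acl (-1) p p Ap Ap.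
  by rewrite scaleN1r mulN1r !addNr.
have Azz : A (z, 1).
  case: (pselect (exists p, A p)) => [[p Ap]|nA]; first exact: Az Ap.
  pose L := (fun p : Z * k => exists c, p = (c *: z, c)).
  exfalso; apply: (maxA L).
    split; first by move=> p Ap; case: nA; exists p.
    by move=> /(_ (z, 1)) h; case: nA; exists (z, 1); apply: h; exists 1; rewrite scale1r.
  split; [|split].
  - move=> a p q [c ->] [d ->] /=; exists (a * c + d).
    by rewrite scalerDl scalerA.
  - move=> c [d [e1 e2]]; move: e1; rewrite e2 => /esym/eqP.
    by rewrite scaler_eq0 (negbTE nz) orbF => /eqP.
  - by move=> p _; exists 1; rewrite scale1r.
have uniq : forall w c d, A (w, c) -> A (w, d) -> c = d.
  move=> w c d Ac Ad; have := Acl (-1) _ _ Ac Ad => /=.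
  rewrite scaleN1r mulN1r addNr => /Afun /eqP.
  by rewrite addrC subr_eq0 => /eqP ->.
have tot : forall w, exists c, A (w, c).
  move=> w; case: (pselect (exists c, A (w, c))) => // nw; exfalso.
  pose B := (fun p : Z * k => exists c q, A q /\ p = (q.1 + c *: w, q.2)).
  apply: (maxA B).
    split.
      move=> p Ap; exists 0, p; split => //; rewrite scale0r addr0.
      by case: p {Ap}.
    move=> /(_ (w, 0)) h; case: nw; exists 0; apply: h.
    by exists 1, (0, 0); split; [exact: A00 Azz|rewrite scale1r add0r].
  split; [|split].
  - move=> a p q [c [p' [Ap' ->]]] [d [q' [Aq' ->]]] /=.
    exists (a * c + d), (a *: p'.1 + q'.1, a * p'.2 + q'.2); split; first exact: Acl.
    congr (_, _) => /=.
    by rewrite scalerDr scalerDl scalerA addrACA.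
  - move=> y [c [q [Aq [e1 e2]]]].
    have [c0|cn0] := eqVneq c 0.
      move: e1; rewrite c0 scale0r addr0 => e1.
      by rewrite e2; apply: Afun; rewrite e1; case: q Aq {e1 e2}.
    case: nw; exists (- c^-1 * q.2).
    have := Acl (- c^-1) q (0, 0) Aq (A00 _ Azz) => /=.
    rewrite !addr0; suff -> : - c^-1 *: q.1 = w by [].
    have -> : q.1 = - (c *: w) by apply/eqP; rewrite -addr_eq0 -e1.
    by rewrite scalerN scaleNr opprK scalerA mulVf // scale1r.
  - by move=> p _; exists 0, (z, 1); split => //; rewrite scale0r addr0.
pose lam w := projT1 (cid (tot w)).
have lamP : forall w, A (w, lam w) by move=> w; rewrite /lam; case: cid.
exists lam; split; last exact: uniq (lamP z) Azz.
move=> a x y; apply: uniq (lamP _) _.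
exact: Acl (x, lam x) (y, lam y) (lamP x) (lamP y).
Qed.

Lemma linf0 lam : linf lam -> lam 0 = 0.
Proof.
move=> h; apply: (addIr (lam 0)); rewrite add0r; have := h 1 0 0.
by rewrite scale1r addr0 mul1r => e; rewrite -e.
Qed.

Lemma linfD lam : linf lam -> forall x y, lam (x + y) = lam x + lam y.
Proof. by move=> h x y; have := h 1 x y; rewrite scale1r mul1r. Qed.

Lemma linfN lam : linf lam -> forall x, lam (- x) = - lam x.
Proof. by move=> h x; have := h (-1) x 0; rewrite addr0 (linf0 h) addr0 scaleN1r mulN1r. Qed.

Lemma linf_sum lam : linf lam -> forall I (r : seq I) (F : I -> Z),
  lam (\sum_(i <- r) F i) = \sum_(i <- r) lam (F i).
Proof.
move=> h I r F; elim: r => [|i r IH]; first by rewrite !big_nil linf0.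
by rewrite !big_cons linfD // IH.
Qed.

Lemma sep (z : Z) : (forall lam, linf lam -> lam z = 0) -> z = 0.
Proof.
move=> h; apply/eqP; apply/negP => /negP nz.
have [lam [l1 l2]] := sep_functional nz.
by move: (h lam l1); rewrite l2 => /eqP; rewrite oner_eq0.
Qed.
End Sep.

End SepM.
Import SepM.

Section Lin.
Variable k : fieldType.
Definition lin (U Z : lmodType k) (f : U -> Z) :=
  forall a x y, f (a *: x + y) = a *: f x + f y.

Variables U Z : lmodType k.
Implicit Types f g : U -> Z.
Lemma lin0 f : lin f -> f 0 = 0.
Proof.
move=> h; apply: (addIr (f 0)); rewrite add0r; have := h 1 0 0.
by rewrite scale1r addr0 scale1r => e; rewrite -e.
Qed.
Lemma linD f : lin f -> forall x y, f (x + y) = f x + f y.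
Proof. by move=> h x y; have := h 1 x y; rewrite !scale1r. Qed.
Lemma linZ f : lin f -> forall a x, f (a *: x) = a *: f x.
Proof. by move=> h a x; have := h a x 0; rewrite addr0 (lin0 h) addr0. Qed.
Lemma linN f : lin f -> forall x, f (- x) = - f x.
Proof. by move=> h x; rewrite -scaleN1r linZ // scaleN1r. Qed.
Lemma linB f : lin f -> forall x y, f (x - y) = f x - f y.
Proof. by move=> h x y; rewrite linD // linN. Qed.
Lemma lin_sum f : lin f -> forall I (r : seq I) (F : I -> U),
  f (\sum_(i <- r) F i) = \sum_(i <- r) f (F i).
Proof.
move=> h I r F; elim: r => [|i r IH]; first by rewrite !big_nil lin0.
by rewrite !big_cons linD // IH.
Qed.

Lemma bilsum (W : lmodType k) (s t : seq (W * W)) : tensor_eq s t ->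
  forall B : W -> W -> Z, (forall w, lin (fun x => B x w)) -> (forall w, lin (B w)) ->
  \sum_(p <- s) B p.1 p.2 = \sum_(p <- t) B p.1 p.2.
Proof.
move=> E B B1 B2; apply/eqP; rewrite -subr_eq0; apply/eqP; apply: (@sep _ Z) => lam hl.
rewrite linfD // linfN // !linf_sum //; apply/eqP; rewrite subr_eq0; apply/eqP.
have lz : forall a (v : Z), lam (a *: v) = a * lam v.
  by move=> a v; rewrite -[a *: v]addr0 hl (linf0 hl) addr0.
by apply: (E (fun x y => lam (B x y))); split => a x y z; rewrite ?B1 ?B2 hl ?lz.
Qed.

Lemma trisum (W : lmodType k) (s t : seq (W * W * W)) : tensor3_eq s t ->
  forall B : W -> W -> W -> Z, (forall v w, lin (fun x => B x v w)) ->
  (forall v w, lin (fun x => B v x w)) -> (forall v w, lin (B v w)) ->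
  \sum_(p <- s) B p.1.1 p.1.2 p.2 = \sum_(p <- t) B p.1.1 p.1.2 p.2.
Proof.
move=> E B B1 B2 B3; apply/eqP; rewrite -subr_eq0; apply/eqP; apply: (@sep _ Z) => lam hl.
rewrite linfD // linfN // !linf_sum //; apply/eqP; rewrite subr_eq0; apply/eqP.
have lz : forall a (v : Z), lam (a *: v) = a * lam v.
  by move=> a v; rewrite -[a *: v]addr0 hl (linf0 hl) addr0.
by apply: (E (fun x y z => lam (B x y z))); split; [|split] => a x y z w; rewrite ?B1 ?B2 ?B3 hl ?lz.
Qed.
End Lin.


Section Hopf.
Variables (k : fieldType) (H : algType k) (pr : bool -> H -> H)
  (D : H -> seq (H * H)) (eps : H -> k) (S : H -> H).
Hypothesis hyp : super_cocomm_hopf pr D eps S.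

Ltac unpack := case: hyp => [[[gl [gi [go gs]]] [gm [p1 [[[_ [[_ [dl [el [ca [cl cr]]]]]
   [dm [d1 [em e1]]]]] [_ [sl [al ar]]]] [dp [eo sp]]]]]] cc].

Lemma pr_lin b : lin (pr b). Proof. by unpack; move=> a x y; rewrite gl. Qed.
Lemma pr_idem b x : pr b (pr b x) = pr b x. Proof. by unpack. Qed.
Lemma pr_orth b x : pr b (pr (~~ b) x) = 0. Proof. by unpack. Qed.
Lemma pr_sum x : pr false x + pr true x = x. Proof. by unpack. Qed.
Lemma pr_mul i j x y : pr (i (+) j) (pr i x * pr j y) = pr i x * pr j y. Proof. by unpack. Qed.
Lemma pr1 : pr false 1 = 1. Proof. by unpack. Qed.
Lemma D_lin a x y : tensor_eq (D (a *: x + y)) ([seq (a *: p.1, p.2) | p <- D x] ++ D y).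
Proof. by unpack; apply: dl. Qed.
Lemma eps_lin a x y : eps (a *: x + y) = a * eps x + eps y. Proof. by unpack; apply: el. Qed.
Lemma coassoc x : tensor3_eq [seq (p.1, q.1, q.2) | p <- D x, q <- D p.2]
     [seq (q.1, q.2, p.2) | p <- D x, q <- D p.1].
Proof. by unpack; apply: ca. Qed.
Lemma counitL x : \sum_(p <- D x) eps p.1 *: p.2 = x. Proof. by unpack; apply: cl. Qed.
Lemma counitR x : \sum_(p <- D x) eps p.2 *: p.1 = x. Proof. by unpack; apply: cr. Qed.
Lemma D_mul x y : tensor_eq (D (x * y)) (stmul pr (D x) (D y)). Proof. by unpack; apply: dm. Qed.
Lemma D_1 : tensor_eq (D 1) [:: (1, 1)]. Proof. by unpack. Qed.
Lemma eps_mul x y : eps (x * y) = eps x * eps y. Proof. by unpack; apply: em. Qed.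
Lemma eps1 : eps 1 = 1. Proof. by unpack. Qed.
Lemma S_lin : lin S. Proof. by unpack; move=> a x y; apply: sl. Qed.
Lemma antL x : \sum_(p <- D x) S p.1 * p.2 = eps x *: 1. Proof. by unpack; apply: al. Qed.
Lemma antR x : \sum_(p <- D x) p.1 * S p.2 = eps x *: 1. Proof. by unpack; apply: ar. Qed.
Lemma D_pr i x : tensor_eq (D (pr i x))
   [seq (pr j p.1, pr (i (+) j) p.2) | p <- D x, j <- [:: false; true]].
Proof. by unpack; apply: dp. Qed.
Lemma eps_odd x : eps (pr true x) = 0. Proof. by unpack. Qed.
Lemma S_pr i x : S (pr i x) = pr i (S x). Proof. by unpack. Qed.
Lemma cocomm x : tensor_eq (D x) (sflip pr (D x)). Proof. by unpack. Qed.

Definition sw (Z : lmodType k) (x : H) (F : H -> H -> Z) := \sum_(p <- D x) F p.1 p.2.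

Section SwZ.
Variable Z : lmodType k.
Implicit Types F G : H -> H -> Z.

Lemma sw_tensor x t F : tensor_eq (D x) t ->
  (forall w, lin (fun y => F y w)) -> (forall w, lin (F w)) ->
  sw x F = \sum_(p <- t) F p.1 p.2.
Proof. by move=> E F1 F2; rewrite /sw (bilsum E). Qed.

Lemma sw_lin F : (forall w, lin (fun y => F y w)) -> (forall w, lin (F w)) ->
  lin (fun x => sw x F).
Proof.
move=> F1 F2 a x y; rewrite /sw (bilsum (D_lin a x y)) // big_cat big_map /=.
by rewrite scaler_sumr; congr (_ + _); apply: eq_bigr => p _; rewrite (linZ (F1 p.2)).
Qed.

Lemma sw_scale x c F : sw x (fun a b => c *: F a b) = c *: sw x F.
Proof. by rewrite /sw scaler_sumr. Qed.
Lemma sw_add x F G : sw x (fun a b => F a b + G a b) = sw x F + sw x G.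
Proof. by rewrite /sw big_split. Qed.
Lemma sw_ext x F G : (forall a b, F a b = G a b) -> sw x F = sw x G.
Proof. by move=> e; apply: eq_bigr => p _; apply: e. Qed.
Lemma sw_push (Y : lmodType k) x (F : H -> H -> Y) (L : Y -> Z) : lin L ->
  sw x (fun a b => L (F a b)) = L (sw x F).
Proof. by move=> hL; rewrite /sw lin_sum. Qed.

Lemma sw_counitL x (L : H -> Z) : lin L -> sw x (fun a b => eps a *: L b) = L x.
Proof.
by move=> hL; rewrite -{2}(counitL x) lin_sum //; apply: eq_bigr => p _; rewrite linZ.
Qed.
Lemma sw_counitR x (L : H -> Z) : lin L -> sw x (fun a b => eps b *: L a) = L x.
Proof.
by move=> hL; rewrite -{2}(counitR x) lin_sum //; apply: eq_bigr => p _; rewrite linZ.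
Qed.
Lemma sw_antL x (L : H -> Z) : lin L -> sw x (fun a b => L (S a * b)) = eps x *: L 1.
Proof. by move=> hL; rewrite sw_push // /sw antL linZ. Qed.
Lemma sw_antR x (L : H -> Z) : lin L -> sw x (fun a b => L (a * S b)) = eps x *: L 1.
Proof. by move=> hL; rewrite sw_push // /sw antR linZ. Qed.

Lemma sw_1 F : (forall w, lin (fun y => F y w)) -> (forall w, lin (F w)) ->
  sw 1 F = F 1 1.
Proof. by move=> F1 F2; rewrite (sw_tensor D_1) // big_seq1. Qed.

Lemma sw_coassoc x (G : H -> H -> H -> Z) :
  (forall v w, lin (fun y => G y v w)) -> (forall v w, lin (fun y => G v y w)) ->
  (forall v w, lin (G v w)) ->
  sw x (fun a b => sw b (fun c d => G a c d)) = sw x (fun a b => sw a (fun c d => G c d b)).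
Proof.
move=> G1 G2 G3; have := trisum (coassoc x) G1 G2 G3.
by rewrite !big_allpairs_dep.
Qed.
End SwZ.

Section LinLemmas.
Variables (U Z : lmodType k).
Lemma lin_id : lin (fun x : U => x). Proof. by []. Qed.
Lemma lin_mull (f : U -> H) w : lin f -> lin (fun x => w * f x).
Proof. by move=> h a x y; rewrite h mulrDr scalerAr. Qed.
Lemma lin_mulr (f : U -> H) w : lin f -> lin (fun x => f x * w).
Proof. by move=> h a x y; rewrite h mulrDl scalerAl. Qed.
Lemma lin_S (f : U -> H) : lin f -> lin (fun x => S (f x)).
Proof. by move=> h a x y; rewrite h S_lin. Qed.
Lemma lin_pr (f : U -> H) b : lin f -> lin (fun x => pr b (f x)).
Proof. by move=> h a x y; rewrite h pr_lin. Qed.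
Lemma lin_add (f g : U -> Z) : lin f -> lin g -> lin (fun x => f x + g x).
Proof.
by move=> hf hg a x y; rewrite hf hg scalerDr -!addrA; congr (_ + _); rewrite addrCA.
Qed.
Lemma lin_opp (f : U -> Z) : lin f -> lin (fun x => - f x).
Proof. by move=> hf a x y; rewrite hf opprD scalerN. Qed.
Lemma lin_sub (f g : U -> Z) : lin f -> lin g -> lin (fun x => f x - g x).
Proof. by move=> hf hg; apply: lin_add => //; apply: lin_opp. Qed.
Lemma lin_scale (f : U -> Z) c : lin f -> lin (fun x => c *: f x).
Proof. by move=> hf a x y; rewrite hf scalerDr !scalerA mulrC. Qed.
Lemma lin_epsZ (f : U -> H) (w : Z) : lin f -> lin (fun x => eps (f x) *: w).
Proof. by move=> hf a x y; rewrite hf eps_lin scalerDl scalerA. Qed.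
Lemma lin_swf (f : U -> H) (F : H -> H -> Z) :
  (forall w, lin (fun y => F y w)) -> (forall w, lin (F w)) -> lin f ->
  lin (fun x => sw (f x) F).
Proof. by move=> F1 F2 hf a x y; rewrite hf (sw_lin F1 F2). Qed.
Lemma lin_swp y (F : U -> H -> H -> Z) :
  (forall a b, lin (fun x => F x a b)) -> lin (fun x => sw y (F x)).
Proof.
move=> hF a x z; rewrite /sw scaler_sumr -big_split; apply: eq_bigr => p _.
by rewrite hF.
Qed.
Lemma lin_G1 (G : H -> H -> Z) (f : U -> H) z :
  (forall w, lin (fun y => G y w)) -> lin f -> lin (fun x => G (f x) z).
Proof. by move=> hG hf a x y; rewrite hf hG. Qed.
Lemma lin_G2 (G : H -> H -> Z) (f : U -> H) z :
  (forall w, lin (G w)) -> lin f -> lin (fun x => G z (f x)).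
Proof. by move=> hG hf a x y; rewrite hf hG. Qed.
Lemma lin_G31 (G : H -> H -> H -> Z) (f : U -> H) z z' :
  (forall v w, lin (fun y => G y v w)) -> lin f -> lin (fun x => G (f x) z z').
Proof. by move=> hG hf a x y; rewrite hf hG. Qed.
Lemma lin_G32 (G : H -> H -> H -> Z) (f : U -> H) z z' :
  (forall v w, lin (fun y => G v y w)) -> lin f -> lin (fun x => G z (f x) z').
Proof. by move=> hG hf a x y; rewrite hf hG. Qed.
Lemma lin_G33 (G : H -> H -> H -> Z) (f : U -> H) z z' :
  (forall v w, lin (G v w)) -> lin f -> lin (fun x => G z z' (f x)).
Proof. by move=> hG hf a x y; rewrite hf hG. Qed.
Lemma lin_G41 (G : H -> H -> H -> H -> Z) (f : U -> H) z1 z2 z3 :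
  (forall u v w, lin (fun y => G y u v w)) -> lin f -> lin (fun x => G (f x) z1 z2 z3).
Proof. by move=> hG hf a x y; rewrite hf hG. Qed.
Lemma lin_G42 (G : H -> H -> H -> H -> Z) (f : U -> H) z1 z2 z3 :
  (forall u v w, lin (fun y => G u y v w)) -> lin f -> lin (fun x => G z1 (f x) z2 z3).
Proof. by move=> hG hf a x y; rewrite hf hG. Qed.
Lemma lin_G43 (G : H -> H -> H -> H -> Z) (f : U -> H) z1 z2 z3 :
  (forall u v w, lin (fun y => G u v y w)) -> lin f -> lin (fun x => G z1 z2 (f x) z3).
Proof. by move=> hG hf a x y; rewrite hf hG. Qed.
Lemma lin_G44 (G : H -> H -> H -> H -> Z) (f : U -> H) z1 z2 z3 :
  (forall u v w, lin (G u v w)) -> lin f -> lin (fun x => G z1 z2 z3 (f x)).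
Proof. by move=> hG hf a x y; rewrite hf hG. Qed.
Lemma lin_sumr I (r : seq I) (F : I -> U -> Z) :
  (forall i, lin (F i)) -> lin (fun x => \sum_(i <- r) F i x).
Proof.
move=> hF a x y; rewrite scaler_sumr -big_split; apply: eq_bigr => i _.
by rewrite hF.
Qed.
End LinLemmas.

Ltac linT := repeat (cbv beta; first
  [ match goal with |- forall _, _ => intro end
  | apply: lin_id
  | apply: lin_swf | apply: lin_swp | apply: lin_S | apply: lin_pr
  | apply: lin_mulr | apply: lin_mull | apply: lin_add | apply: lin_sub | apply: lin_opp
  | apply: lin_scale | apply: lin_epsZ | apply: lin_sumr
  | (eapply lin_G1; [eassumption|]) | (eapply lin_G2; [eassumption|])
  | (eapply lin_G31; [eassumption|]) | (eapply lin_G32; [eassumption|])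
  | (eapply lin_G33; [eassumption|])
  | (eapply lin_G41; [eassumption|]) | (eapply lin_G42; [eassumption|])
  | (eapply lin_G43; [eassumption|]) | (eapply lin_G44; [eassumption|])
  | eassumption ]).

Definition E y := pr false y = y.
Definition A := even_part_sub pr D.

Lemma E_odd y : E y -> pr true y = 0.
Proof. by move=> <-; apply: (pr_orth true). Qed.
Lemma E_lin a x y : E x -> E y -> E (a *: x + y).
Proof. by rewrite /E pr_lin => -> ->. Qed.
Lemma E0 : E 0. Proof. by rewrite /E (lin0 (pr_lin false)). Qed.
Lemma E1 : E 1. Proof. exact: pr1. Qed.
Lemma E_mul x y : E x -> E y -> E (x * y).
Proof. by rewrite /E => ex ey; have := pr_mul false false x y; rewrite ex ey. Qed.
Lemma E_S y : E y -> E (S y).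
Proof. by rewrite /E => ey; rewrite -S_pr ey. Qed.
Lemma E_pr y : E (pr false y). Proof. exact: pr_idem. Qed.
Lemma prE_odd y : pr true y = y -> pr false y = 0.
Proof. by move=> <-; apply: (pr_orth false). Qed.

Lemma sum_par (Z : lmodType k) (g : bool * bool -> Z) :
  \sum_(ij <- parities) g ij = g (false, false) + g (false, true) + g (true, false) + g (true, true).
Proof. by rewrite /parities !big_cons big_nil addr0 !addrA. Qed.

Lemma stmul_sum (Z : lmodType k) s t (F : H -> H -> Z) :
  (forall w, lin (fun y => F y w)) ->
  \sum_(p <- stmul pr s t) F p.1 p.2 = \sum_(p <- s) \sum_(q <- t)
     \sum_(ij <- parities) (-1) ^+ (ij.1 && ij.2) *: F (p.1 * pr ij.2 q.1) (pr ij.1 p.2 * q.2).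
Proof.
move=> F1; rewrite /stmul big_flatten /= big_allpairs_dep /=; apply: eq_bigr => p _.
apply: eq_bigr => q _; rewrite sum_par /= !big_cons big_nil /= addr0 !addrA.
by rewrite !(linZ (F1 _)).
Qed.

Lemma sflip_sum (Z : lmodType k) s (F : H -> H -> Z) :
  (forall w, lin (fun y => F y w)) ->
  \sum_(p <- sflip pr s) F p.1 p.2 = \sum_(p <- s)
     \sum_(ij <- parities) (-1) ^+ (ij.1 && ij.2) *: F (pr ij.2 p.2) (pr ij.1 p.1).
Proof.
move=> F1; rewrite /sflip big_flatten /= big_map; apply: eq_bigr => p _.
rewrite sum_par /= !big_cons big_nil /= addr0 !addrA.
by rewrite !(linZ (F1 _)).
Qed.

Section Mul.
Variable Z : lmodType k.
Implicit Types F : H -> H -> Z.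

Lemma sw_mulR x y F : A y ->
  (forall w, lin (fun y => F y w)) -> (forall w, lin (F w)) ->
  sw (x * y) F = sw x (fun a b => sw y (fun c d => F (a * c) (b * d))).
Proof.
move=> [t Et tE] F1 F2; rewrite (sw_tensor (D_mul x y)) // stmul_sum //.
apply: eq_bigr => p _; rewrite /= (sw_tensor Et); last 2 first.
- by linT.
- by linT.
rewrite (@bilsum _ _ _ _ _ Et (fun c d : H => \sum_(ij <- parities) (-1) ^+ (ij.1 && ij.2) *:
   F (p.1 * pr ij.2 c) (pr ij.1 p.2 * d))); last 2 first.
- move=> w; apply: lin_sumr => ij; apply: lin_scale; linT.
- move=> w; apply: lin_sumr => ij; apply: lin_scale; linT.
apply: eq_big_seq => q /tE [e1 e2]; rewrite sum_par /= (E_odd e1) e1.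
rewrite !mulr0 !(lin0 (F1 _)) !scaler0 !addr0 !expr0 !scale1r.
by rewrite -(linD (F2 _)) -mulrDl pr_sum.
Qed.

Lemma sw_mulL x y F : A x ->
  (forall w, lin (fun y => F y w)) -> (forall w, lin (F w)) ->
  sw (x * y) F = sw x (fun a b => sw y (fun c d => F (a * c) (b * d))).
Proof.
move=> [t Et tE] F1 F2; rewrite (sw_tensor (D_mul x y)) // stmul_sum //.
rewrite (@bilsum _ _ _ _ _ Et (fun a b : H => \sum_(q <- D y) \sum_(ij <- parities) (-1) ^+ (ij.1 && ij.2) *:
   F (a * pr ij.2 q.1) (pr ij.1 b * q.2))); last 2 first.
- move=> w; apply: lin_sumr => q; apply: lin_sumr => ij; apply: lin_scale; linT.
- move=> w; apply: lin_sumr => q; apply: lin_sumr => ij; apply: lin_scale; linT.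
rewrite (sw_tensor Et); last 2 first.
- by linT.
- by linT.
apply: eq_big_seq => p /tE [e1 e2]; apply: eq_bigr => q _.
rewrite sum_par /= (E_odd e2) e2.
rewrite !mul0r !(lin0 (F2 _)) !scaler0 !addr0 !expr0 !scale1r.
by rewrite -(linD (F1 _)) -mulrDr pr_sum.
Qed.
End Mul.

Lemma sw_cocommA (Z : lmodType k) x (F : H -> H -> Z) : A x ->
  (forall w, lin (fun y => F y w)) -> (forall w, lin (F w)) ->
  sw x F = sw x (fun a b => F b a).
Proof.
move=> [t Et tE] F1 F2; rewrite /sw (bilsum (cocomm x)) // sflip_sum //.
rewrite (@bilsum _ _ _ _ _ Et (fun a b : H => \sum_(ij <- parities)
   (-1) ^+ (ij.1 && ij.2) *: F (pr ij.2 b) (pr ij.1 a))); last 2 first.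
- move=> w; apply: lin_sumr => ij; apply: lin_scale; linT.
- move=> w; apply: lin_sumr => ij; apply: lin_scale; linT.
rewrite (@bilsum _ _ _ _ _ Et (fun a b : H => F b a)); last 2 first.
- by linT.
- by linT.
apply: eq_big_seq => p /tE [e1 e2]; rewrite sum_par /= !E_odd // e1 e2.
by rewrite !(lin0 (F1 _)) !(lin0 (F2 _)) !scaler0 !addr0 expr0 scale1r.
Qed.

Section BF.
Variable phi : H -> H -> k.
Hypothesis bphi : bilinear_form phi.
Lemma bf0l z : phi 0 z = 0.
Proof.
case: bphi => h _; apply: (addIr (phi 0 z)); rewrite add0r.
by have := h 1 0 0 z; rewrite scale1r addr0 mul1r => e; rewrite -e.
Qed.
Lemma bf0r z : phi z 0 = 0.
Proof.
case: bphi => _ h; apply: (addIr (phi z 0)); rewrite add0r.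
by have := h 1 0 0 z; rewrite scale1r addr0 mul1r => e; rewrite -e.
Qed.
Lemma bfZl a x z : phi (a *: x) z = a * phi x z.
Proof. by case: bphi => h _; rewrite -[a *: x]addr0 h bf0l addr0. Qed.
Lemma bfZr a x z : phi z (a *: x) = a * phi z x.
Proof. by case: bphi => _ h; rewrite -[a *: x]addr0 h bf0r addr0. Qed.
Lemma bfDl x y z : phi (x + y) z = phi x z + phi y z.
Proof. by case: bphi => h _; rewrite -[x]scale1r h mul1r scale1r. Qed.
Lemma bfDr x y z : phi z (x + y) = phi z x + phi z y.
Proof. by case: bphi => _ h; rewrite -[x]scale1r h mul1r scale1r. Qed.
Lemma bfNr x z : phi z (- x) = - phi z x.
Proof. by rewrite -scaleN1r bfZr mulN1r. Qed.
Lemma bfNl x z : phi (- x) z = - phi x z.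
Proof. by rewrite -scaleN1r bfZl mulN1r. Qed.
Lemma bf_sumr I (r : seq I) (F : I -> H) z :
  phi z (\sum_(i <- r) F i) = \sum_(i <- r) phi z (F i).
Proof.
elim: r => [|i r IH]; first by rewrite !big_nil bf0r.
by rewrite !big_cons bfDr IH.
Qed.
Lemma bf_flip : bilinear_form (fun a b => phi b a).
Proof. by case: bphi => h1 h2; split => *; rewrite ?h1 ?h2. Qed.
Lemma swk_lin a x y : \sum_(p <- D (a *: x + y)) phi p.1 p.2 =
  a * \sum_(p <- D x) phi p.1 p.2 + \sum_(p <- D y) phi p.1 p.2.
Proof.
rewrite (D_lin a x y bphi) big_cat big_map /= big_distrr; congr (_ + _).
by apply: eq_bigr => p _; rewrite bfZl.
Qed.
End BF.

Lemma tensor_eq_flip (s t : seq (H * H)) : tensor_eq s t -> tensor_eq (flip s) (flip t).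
Proof.
move=> e phi bphi; rewrite /flip !big_map /=.
exact: (e (fun a b => phi b a) (bf_flip bphi)).
Qed.
Lemma flipK (s : seq (H * H)) : flip (flip s) = s.
Proof. by rewrite /flip -map_comp map_id_in // => -[]. Qed.

Definition Eent (t : seq (H * H)) := forall p, p \in t -> E p.1 /\ E p.2.
Definition Aent (t : seq (H * H)) := forall p, p \in t -> A p.1 /\ A p.2.

Lemma shorten t (w : H * H -> k) p0 : Eent t ->
  \sum_(p <- t) w p *: p.2 = 0 -> p0 \in t -> w p0 != 0 ->
  exists t', tensor_eq t t' /\ Eent t' /\ (size t' < size t)%N.
Proof.
move=> tE sum0 p0t wn0; case/splitPr: p0t tE sum0 => t1 t2 tE sum0.
have m0 : E p0.1 /\ E p0.2 by apply: tE; rewrite mem_cat in_cons eqxx orbT.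
have s0 : w p0 *: p0.2 + \sum_(p <- t1 ++ t2) w p *: p.2 = 0.
  by move: sum0; rewrite !big_cat big_cons /= addrCA.
have e2 : p0.2 = - \sum_(p <- t1 ++ t2) (w p / w p0) *: p.2.
  apply: (scalerI wn0); rewrite scalerN scaler_sumr.
  under eq_bigr do rewrite scalerA mulrCA mulfV // mulr1.
  by apply/eqP; rewrite -addr_eq0; apply/eqP.
exists [seq (p.1 - (w p / w p0) *: p0.1, p.2) | p <- t1 ++ t2]; split; [|split].
- move=> phi bphi; rewrite big_map /= big_cat big_cons /= e2 (bfNr bphi) (bf_sumr bphi).
  rewrite !big_cat /=.
  under [X in _ = X + _]eq_bigr do rewrite (bfDl bphi) (bfNl bphi) (bfZl bphi).
  under [X in _ = _ + X]eq_bigr do rewrite (bfDl bphi) (bfNl bphi) (bfZl bphi).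
  under [X in _ + (- (X + _) + _) = _]eq_bigr do rewrite (bfZr bphi).
  under [X in _ + (- (_ + X) + _) = _]eq_bigr do rewrite (bfZr bphi).
  rewrite !big_split /= !sumrN; ring.
- move=> p /mapP [q qt ->] /=; have [e1 e3] : E q.1 /\ E q.2.
    by apply: tE; move: qt; rewrite !mem_cat in_cons => /orP [] ->; rewrite ?orbT.
  by split => //; rewrite /E (linB (pr_lin false)) (linZ (pr_lin false)) e1 m0.1.
- by rewrite size_map !size_cat /= addnS.
Qed.

Lemma bf_prod (f g : H -> k) : linf f -> linf g -> bilinear_form (fun a b => f a * g b).
Proof. by move=> hf hg; split=> a x y z; rewrite ?hf ?hg; ring. Qed.
Lemma bf_pr phi b : bilinear_form phi -> bilinear_form (fun x y => phi (pr b x) (pr b y)).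
Proof. by case=> h1 h2; split=> *; rewrite pr_lin ?h1 ?h2. Qed.
Lemma linf_pr (phi : H -> H -> k) z b : bilinear_form phi -> linf (fun x => phi z (pr b x)).
Proof. by case=> _ h2 a x y; rewrite pr_lin h2. Qed.
Lemma linf_prl (phi : H -> H -> k) z b : bilinear_form phi -> linf (fun x => phi (pr b x) z).
Proof. by case=> h1 _ a x y; rewrite pr_lin h1. Qed.
Lemma linf_sw phi : bilinear_form phi -> linf (fun x => \sum_(q <- D x) phi q.1 q.2).
Proof. by move=> bphi a x y; rewrite swk_lin. Qed.

Lemma te_trans (s t u : seq (H * H)) : tensor_eq s t -> tensor_eq t u -> tensor_eq s u.
Proof. by move=> e1 e2 phi bphi; rewrite e1 // e2. Qed.

Lemma oddodd_zero x : E x -> (forall phi, bilinear_form phi ->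
  \sum_(q <- D x) phi (pr true q.1) (pr true q.2) = 0) -> A x.
Proof.
move=> ex h0; exists [seq (pr false q.1, pr false q.2) | q <- D x]; last first.
  by move=> p /mapP [q _ ->]; split; apply: E_pr.
move=> phi bphi; rewrite -{1}ex (D_pr false x bphi) big_allpairs_dep big_map /=.
under eq_bigr do rewrite !big_cons big_nil addr0.
by rewrite big_split /= (h0 _ bphi) addr0.
Qed.

Lemma Eent_flip t : Eent t -> Eent (flip t).
Proof. by move=> tE p /mapP [q /tE [e1 e2] ->]. Qed.

Lemma minimal_A x t : tensor_eq (D x) t -> Eent t ->
  ~ (exists t', tensor_eq (D x) t' /\ Eent t' /\ (size t' < size t)%N) -> Aent t.
Proof.
move=> Et tE nmin p pt; have [e1 e2] := tE p pt.
pose c (phi : H -> H -> k) (a : H) : k := \sum_(q <- D a) phi (pr true q.1) (pr true q.2).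
split; apply: oddodd_zero => // phi bphi; have bphi' := bf_pr true bphi.
- have sum0 : \sum_(p <- t) c phi p.1 *: p.2 = 0.
    apply: (@sep _ H) => lam hl; rewrite linf_sum //.
    transitivity (\sum_(p <- t) c phi p.1 * lam p.2).
      by apply: eq_bigr => q _; rewrite -[_ *: _]addr0 hl (linf0 hl) addr0.
    rewrite -(Et _ (bf_prod (linf_sw bphi') hl)).
    rewrite /c; under eq_bigr do rewrite big_distrl /=.
    have tri : trilinear_form (fun a b d => phi (pr true a) (pr true b) * lam d).
      by split; [|split] => a' x' y' z' w'; rewrite ?(pr_lin true) ?(bfDl bphi) ?(bfDr bphi)
        ?(bfZl bphi) ?(bfZr bphi) ?hl; ring.
    have := coassoc x tri; rewrite !big_allpairs_dep /= => <-.
    have bf2 : bilinear_form (fun a b => \sum_(q <- D b) phi (pr true a) (pr true q.1) * lam q.2).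
      split => a' x' y' z'.
        rewrite big_distrr -big_split; apply: eq_bigr => q _ /=.
        by rewrite (pr_lin true) (bfDl bphi) (bfZl bphi); ring.
      exact: (swk_lin (bf_prod (linf_pr (pr true z') true bphi) hl)).
    rewrite (Et _ bf2); apply: big1_seq => q /tE [f1 _] /=; rewrite (E_odd f1).
    by apply: big1 => r _; rewrite (bf0l bphi) mul0r.
  case: (eqVneq (c phi p.1) 0) => // cn0; exfalso; apply: nmin.
  have [t' [e' [E' lt]]] := shorten (w := fun p => c phi p.1) tE sum0 pt cn0.
  by exists t'; split; [exact: te_trans Et e'|].
- have sum0 : \sum_(p <- t) c phi p.2 *: p.1 = 0.
    apply: (@sep _ H) => lam hl; rewrite linf_sum //.
    transitivity (\sum_(p <- t) lam p.1 * c phi p.2).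
      by apply: eq_bigr => q _; rewrite -[_ *: _]addr0 hl (linf0 hl) addr0 mulrC.
    rewrite -(Et _ (bf_prod hl (linf_sw bphi'))).
    rewrite /c; under eq_bigr do rewrite big_distrr /=.
    have tri : trilinear_form (fun a b d => lam a * phi (pr true b) (pr true d)).
      by split; [|split] => a' x' y' z' w'; rewrite ?(pr_lin true) ?(bfDl bphi) ?(bfDr bphi)
        ?(bfZl bphi) ?(bfZr bphi) ?hl; ring.
    have := coassoc x tri; rewrite !big_allpairs_dep /= => ->.
    have bf2 : bilinear_form (fun a b => \sum_(q <- D a) lam q.1 * phi (pr true q.2) (pr true b)).
      split => a' x' y' z'.
        exact: (swk_lin (bf_prod hl (linf_prl (pr true z') true bphi))).
      rewrite big_distrr -big_split; apply: eq_bigr => q _ /=.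
      by rewrite (pr_lin true) (bfDr bphi) (bfZr bphi); ring.
    rewrite (Et _ bf2); apply: big1_seq => q /tE [_ f2] /=; rewrite (E_odd f2).
    by apply: big1 => r _; rewrite (bf0r bphi) mulr0.
  case: (eqVneq (c phi p.2) 0) => // cn0; exfalso; apply: nmin.
  have sum0' : \sum_(q <- flip t) c phi q.1 *: q.2 = 0 by rewrite big_map.
  have pt' : (p.2, p.1) \in flip t by apply: (map_f (fun p : H * H => (p.2, p.1))).
  have [t' [e' [E' lt]]] := shorten (w := fun p => c phi p.1) (Eent_flip tE) sum0' pt' cn0.
  exists (flip t'); split; last split.
  + apply: te_trans Et _; rewrite -[t]flipK; exact: tensor_eq_flip.
  + exact: Eent_flip.
  + by move: lt; rewrite !size_map.
Qed.

Lemma A_rep x : A x -> exists t, tensor_eq (D x) t /\ Aent t.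
Proof.
case=> t0 E0 tE0.
suff : forall n t, (size t <= n)%N -> tensor_eq (D x) t -> Eent t ->
   exists t, tensor_eq (D x) t /\ Aent t by move/(_ _ t0 (leqnn _) E0 tE0).
elim=> [|n IH] t st Et tE.
- exists t; split => //; apply: (minimal_A Et tE) => -[t' [_ [_ lt]]].
  by move: (leq_trans lt st).
- case: (boolp.pselect (exists t', tensor_eq (D x) t' /\ Eent t' /\ (size t' < size t)%N)).
    move=> [t' [e' [E' lt]]]; apply: (IH t') => //.
    by rewrite -ltnS (leq_trans lt st).
  by move=> nmin; exists t; split => //; apply: (minimal_A Et tE).
Qed.

Lemma bfL1 (phi : H -> H -> k) : bilinear_form phi ->
  forall w, @lin _ H k^o (fun y => phi y w).
Proof. by case=> h _ w a x y; rewrite h. Qed.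
Lemma bfL2 (phi : H -> H -> k) : bilinear_form phi ->
  forall w, @lin _ H k^o (phi w).
Proof. by case=> _ h w a x y; rewrite h. Qed.

Lemma swA_congr (Z : lmodType k) x (F G : H -> H -> Z) : A x ->
  (forall w, lin (fun y => F y w)) -> (forall w, lin (F w)) ->
  (forall w, lin (fun y => G y w)) -> (forall w, lin (G w)) ->
  (forall a b, A a -> A b -> F a b = G a b) -> sw x F = sw x G.
Proof.
move=> /A_rep [t [Et tA]] F1 F2 G1 G2 e.
rewrite (sw_tensor Et) // (sw_tensor Et) //; apply: eq_big_seq => p /tA [] //.
exact: e.
Qed.

Lemma A_E x : A x -> E x.
Proof.
move=> [t Et tE]; rewrite /E -(counitL x).
have L : forall w, lin (fun y : H => eps w *: y) by move=> w a u v; rewrite scalerDr !scalerA mulrC.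
rewrite (@bilsum _ _ _ _ _ Et (fun a b => eps a *: b)) //; last first.
  by move=> w; apply: lin_epsZ; apply: lin_id.
rewrite (lin_sum (pr_lin false)); apply: eq_big_seq => p /tE [_ e2].
by rewrite (linZ (pr_lin false)) e2.
Qed.

Section Assoc.
Variable Z : lmodType k.

Lemma sw_swap x y (F : H -> H -> H -> H -> Z) :
  sw x (fun a b => sw y (fun c d => F a b c d)) = sw y (fun c d => sw x (fun a b => F a b c d)).
Proof. exact: exchange_big. Qed.

Variable K : H -> H -> H -> H -> Z.
Hypotheses (K1 : forall u v w, lin (fun y => K y u v w)) (K2 : forall u v w, lin (fun y => K u y v w))
  (K3 : forall u v w, lin (fun y => K u v y w)) (K4 : forall u v w, lin (K u v w)).

Lemma sw_assoc4 x :
  sw x (fun p q => sw p (fun e f => sw q (fun g h => K e f g h))) =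
  sw x (fun e q => sw q (fun m h => sw m (fun f g => K e f g h))).
Proof.
rewrite -(@sw_coassoc _ x (fun e f q => sw q (fun g h => K e f g h))); try by linT.
apply: sw_ext => e q.
by rewrite (@sw_coassoc _ q (fun f g h => K e f g h)); try by linT.
Qed.
End Assoc.

Lemma sw_mid_swap (Z : lmodType k) x (K : H -> H -> H -> H -> Z) : A x ->
  (forall u v w, lin (fun y => K y u v w)) -> (forall u v w, lin (fun y => K u y v w)) ->
  (forall u v w, lin (fun y => K u v y w)) -> (forall u v w, lin (K u v w)) ->
  sw x (fun p q => sw p (fun e f => sw q (fun g h => K e f g h))) =
  sw x (fun p q => sw p (fun e f => sw q (fun g h => K e g f h))).
Proof.
move=> Ax K1 K2 K3 K4.
rewrite sw_assoc4 // (sw_assoc4 (K := fun e f g h => K e g f h)); try by linT.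
apply: swA_congr; try by linT.
move=> e q _ Aq; apply: swA_congr; try by linT.
by move=> m h Am _; apply: sw_cocommA => //; linT.
Qed.

Section Conv.
Variable Z : lmodType k.
Variable G : H -> H -> Z.
Hypotheses (G1 : forall w, lin (fun y => G y w)) (G2 : forall w, lin (G w)).

Lemma convA a : A a ->
  sw a (fun a1 a2 => sw (S a1) (fun u w => sw a2 (fun c d => G (u * c) (w * d)))) = eps a *: G 1 1.
Proof.
move=> Aa; rewrite (swA_congr (G := fun a1 a2 => sw (S a1 * a2) G)) //; try by linT.
  by rewrite (@sw_antL _ _ (fun z => sw z G)) ?sw_1 //; linT.
by move=> a1 a2 _ A2; rewrite sw_mulR.
Qed.

Lemma convB b : A b ->
  sw b (fun b1 b2 => sw b1 (fun u w => sw b2 (fun c d => G (u * S c) (w * S d)))) = eps b *: G 1 1.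
Proof.
move=> Ab; rewrite (sw_mid_swap (K := fun u w c d => G (u * S c) (w * S d))) //; try by linT.
rewrite -(@sw_counitR _ b (fun z => eps z *: G 1 1)); last by linT.
apply: sw_ext => b1 b2.
under sw_ext => u w do rewrite (@sw_antR _ _ (fun z => G (u * S w) z)) //.
by rewrite sw_scale (@sw_antR _ _ (fun z => G z 1)) //; linT.
Qed.
End Conv.

Lemma S2 (Z : lmodType k) x (G : H -> H -> Z) : A x ->
  (forall w, lin (fun y => G y w)) -> (forall w, lin (G w)) ->
  sw (S x) G = sw x (fun a b => G (S a) (S b)).
Proof.
move=> Ax G1 G2.
rewrite -(@sw_counitR _ x (fun z => sw (S z) G)); last by linT.
have -> : sw x (fun a b => eps b *: sw (S a) G) = sw x (fun a b => sw (S a) (fun u w => sw b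
   (fun b1 b2 => sw b1 (fun p q => sw b2 (fun c d => G (u * p * S c) (w * q * S d)))))).
  apply: swA_congr => //; try by linT.
  move=> a b _ Ab; rewrite -sw_scale; apply: sw_ext => u w.
  have := convB (G := fun z z' => G (u * z) (w * z')) _ _ Ab; rewrite !mulr1 => <-; try by linT.
  apply: sw_ext => b1 b2; apply: sw_ext => p q; apply: sw_ext => c d.
  by rewrite !mulrA.
transitivity (sw x (fun a b => sw b (fun b1 b2 => sw (S a) (fun u w => sw b1
   (fun p q => sw b2 (fun c d => G (u * p * S c) (w * q * S d))))))).
  by apply: sw_ext => a b; rewrite sw_swap.
rewrite (@sw_coassoc _ x (fun a b1 b2 => sw (S a) (fun u w => sw b1
   (fun p q => sw b2 (fun c d => G (u * p * S c) (w * q * S d)))))); try by linT.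
rewrite -(@sw_counitL _ x (fun z => sw z (fun c d => G (S c) (S d)))); last by linT.
apply: swA_congr => //; try by linT.
move=> a' b2 Aa' _.
have := convA (G := fun z z' => sw b2 (fun c d => G (z * S c) (z' * S d))) _ _ Aa'.
move=> ->; try by linT.
by congr (_ *: _); apply: sw_ext => c d; rewrite !mul1r.
Qed.

Lemma unit_id b d : (eps b * eps d) *: (1 : H) =
  sw b (fun p q => sw d (fun r s => p * r * (S s * S q))).
Proof.
transitivity (sw b (fun p q => eps d *: (p * S q))).
  by rewrite sw_scale /sw antR scalerA mulrC.
apply: sw_ext => p q.
transitivity (sw d (fun r s => p * (r * S s) * S q)); last first.
  by apply: sw_ext => r s; rewrite !mulrA.
by rewrite (@sw_antR _ _ (fun z => p * z * S q)) ?mulr1 //; linT.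
Qed.

Lemma S1 x y : A x -> A y -> S (x * y) = S y * S x.
Proof.
move=> Ax Ay.
rewrite -(@sw_counitR _ x (fun z => S (z * y))); last by linT.
transitivity (sw x (fun a b => sw y (fun c d => S (a * c) * ((eps b * eps d) *: 1)))).
  apply: sw_ext => a b; rewrite -(@sw_counitR _ y (fun z => S (a * z))); last by linT.
  by rewrite -sw_scale; apply: sw_ext => c d; rewrite mulr_algr scalerA.
transitivity (sw x (fun a b => sw b (fun p q => sw y (fun c d => sw d (fun r s =>
    S (a * c) * (p * r) * (S s * S q)))))).
  apply: sw_ext => a b; rewrite sw_swap; apply: sw_ext => c d; rewrite unit_id.
  rewrite -(@sw_push _ _ b _ (fun z => S (a * c) * z)); last by linT.
  apply: sw_ext => p q; rewrite -(@sw_push _ _ d _ (fun z => S (a * c) * z)); last by linT.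
  by apply: sw_ext => r s; rewrite !mulrA.
rewrite (@sw_coassoc _ x (fun a p q => sw y (fun c d => sw d (fun r s =>
    S (a * c) * (p * r) * (S s * S q))))); try by linT.
transitivity (sw x (fun a' q => sw y (fun c' s => sw a' (fun a p => sw c' (fun c r =>
    S (a * c) * (p * r) * (S s * S q)))))).
  apply: sw_ext => a' q; rewrite sw_swap.
  transitivity (sw y (fun c d => sw d (fun r s => sw a' (fun a p =>
     S (a * c) * (p * r) * (S s * S q))))).
    by apply: sw_ext => c d; rewrite sw_swap.
  rewrite (@sw_coassoc _ y (fun c r s => sw a' (fun a p =>
     S (a * c) * (p * r) * (S s * S q)))); try by linT.
  by apply: sw_ext => c' s; rewrite sw_swap.
transitivity (sw x (fun a' q => sw y (fun c' s => eps a' *: (eps c' *: (S s * S q))))).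
  apply: swA_congr => //; try by linT.
  move=> a' q _ _; apply: swA_congr => //; try by linT.
  move=> c' s Ac' _.
  rewrite -(@sw_mulR _ a' c' (fun u v => S u * v * (S s * S q))) //; try by linT.
  rewrite (@sw_antL _ _ (fun z => z * (S s * S q))); last by linT.
  by rewrite eps_mul mul1r scalerA.
transitivity (sw x (fun a' q => eps a' *: (S y * S q))).
  apply: sw_ext => a' q; rewrite sw_scale; congr (_ *: _).
  by apply: (@sw_counitL _ y (fun z => S z * S q)); linT.
by apply: (@sw_counitL _ x (fun z => S y * S z)); linT.
Qed.

Lemma D0 : tensor_eq (D 0) [::].
Proof.
move=> phi bphi; rewrite big_nil; have := swk_lin bphi 1 0 0.
rewrite scale1r addr0 mul1r => /(congr1 (fun z => z - \sum_(p <- D 0) phi p.1 p.2)).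
by rewrite subrr addrK => e; rewrite -e.
Qed.

Lemma te_sw x (t : seq (H * H)) : (forall phi : H -> H -> k, bilinear_form phi ->
  (forall w, @lin _ H k^o (fun y => phi y w)) -> (forall w, @lin _ H k^o (phi w)) ->
  @sw k^o x phi = \sum_(p <- t) (phi p.1 p.2 : k^o)) -> tensor_eq (D x) t.
Proof. by move=> h phi bphi; apply: h => //; [exact: bfL1|exact: bfL2]. Qed.

Lemma E_scale a x : E x -> E (a *: x).
Proof. by rewrite /E (linZ (pr_lin false)) => ->. Qed.

Lemma A0 : A 0.
Proof. by exists [::]; [exact: D0|]. Qed.

Lemma A_lin a x y : A x -> A y -> A (a *: x + y).
Proof.
move=> [t1 E1 tE1] [t2 E2 tE2]; exists ([seq (a *: p.1, p.2) | p <- t1] ++ t2).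
  move=> phi bphi; rewrite swk_lin // (E1 _ bphi) (E2 _ bphi) big_cat big_map /=.
  by rewrite big_distrr; congr (_ + _); apply: eq_bigr => p _; rewrite (bfZl bphi).
move=> p; rewrite mem_cat => /orP [/mapP [q /tE1 [e1 e2] ->]|/tE2 //].
by split => //; apply: E_scale.
Qed.

Lemma A1 : A 1.
Proof. by exists [:: (1, 1)]; [exact: D_1|move=> p; rewrite inE => /eqP ->; split; exact: E1]. Qed.

Lemma A_mul x y : A x -> A y -> A (x * y).
Proof.
move=> Ax Ay; case: (Ax) => [t1 E1 tE1]; case: (Ay) => [t2 E2 tE2].
exists [seq (p.1 * q.1, p.2 * q.2) | p <- t1, q <- t2]; last first.
  by move=> p /allpairsPdep [p1 [q1 [/tE1 [e1 e2] /tE2 [e3 e4] ->]]]; split; apply: E_mul.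
apply: te_sw => phi bphi L1 L2; rewrite sw_mulR //.
rewrite (sw_tensor E1); try by linT.
rewrite big_allpairs_dep; apply: eq_bigr => p _.
by rewrite (sw_tensor E2); try by linT.
Qed.

Lemma D_mulA x y : A y -> tensor_eq (D (x * y)) (tmul (D x) (D y)).
Proof.
move=> Ay; apply: te_sw => phi bphi L1 L2.
by rewrite sw_mulR // /tmul big_allpairs_dep.
Qed.

Lemma A_S x : A x -> A (S x).
Proof.
move=> Ax; case: (Ax) => [t Et tE]; exists [seq (S p.1, S p.2) | p <- t]; last first.
  by move=> p /mapP [q /tE [e1 e2] ->]; split; apply: E_S.
apply: te_sw => phi bphi L1 L2; rewrite S2 //.
by rewrite (sw_tensor Et) ?big_map //; linT.
Qed.

Lemma cocomm_flip x : A x -> tensor_eq (D x) (flip (D x)).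
Proof.
move=> Ax; apply: te_sw => phi bphi L1 L2.
by rewrite sw_cocommA // /flip big_map.
Qed.

Definition V := odd_prim pr D.
Definition act := adj_act D S.

Lemma act_sw v a : act v a = sw a (fun p q => S p * v * q). Proof. by []. Qed.

Lemma prim_sw (Z : lmodType k) v (F : H -> H -> Z) : tensor_eq (D v) [:: (v, 1); (1, v)] ->
  (forall w, lin (fun y => F y w)) -> (forall w, lin (F w)) -> sw v F = F v 1 + F 1 v.
Proof. by move=> e F1 F2; rewrite (sw_tensor e) // !big_cons big_nil addr0. Qed.

Lemma V0 : V 0.
Proof.
split; first exact: (lin0 (pr_lin true)).
by move=> phi bphi; rewrite (D0 bphi) !big_cons big_nil /= (bf0l bphi) (bf0r bphi) !addr0.
Qed.

Lemma V_lin a x y : V x -> V y -> V (a *: x + y).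
Proof.
move=> [ox px] [oy py]; split; first by rewrite pr_lin ox oy.
apply: te_sw => phi bphi L1 L2; rewrite sw_lin //.
rewrite !(prim_sw px) // !(prim_sw py) //.
rewrite !big_cons big_nil /= addr0 (L1 1) (L2 1).
by rewrite scalerDr !addrA; congr (_ + _); rewrite -!addrA; congr (_ + _); rewrite addrC.
Qed.

Lemma S_one : S 1 = 1.
Proof.
have := antL 1; rewrite -/(sw 1 (fun a b => S a * b)) sw_1 ?eps1 ?scale1r ?mulr1 //; linT.
Qed.

Lemma act_1 v : act v 1 = v.
Proof. by rewrite act_sw sw_1 ?S_one ?mul1r ?mulr1 //; linT. Qed.

Lemma act_linv c u v a : act (c *: u + v) a = c *: act u a + act v a.
Proof.
rewrite !act_sw -sw_scale -sw_add; apply: sw_ext => p q.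
by rewrite mulrDr mulrDl -scalerAr -scalerAl.
Qed.

Lemma act_lina c v a b : act v (c *: a + b) = c *: act v a + act v b.
Proof. by rewrite !act_sw sw_lin //; linT. Qed.

Lemma lin_act (U : lmodType k) v (f : U -> H) : lin f -> lin (fun x => act v (f x)).
Proof. by move=> hf c x y; rewrite hf act_lina. Qed.
Lemma lin_act1 (U : lmodType k) a (f : U -> H) : lin f -> lin (fun x => act (f x) a).
Proof. by move=> hf c x y; rewrite hf act_linv. Qed.

Ltac linT ::= repeat (cbv beta; first
  [ match goal with |- forall _, _ => intro end
  | apply: lin_id
  | apply: lin_swf | apply: lin_swp | apply: lin_S | apply: lin_pr
  | apply: lin_mulr | apply: lin_mull | apply: lin_add | apply: lin_sub | apply: lin_opp
  | apply: lin_scale | apply: lin_epsZ | apply: lin_sumr | apply: lin_act | apply: lin_act1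
  | (eapply lin_G1; [eassumption|]) | (eapply lin_G2; [eassumption|])
  | (eapply lin_G31; [eassumption|]) | (eapply lin_G32; [eassumption|])
  | (eapply lin_G33; [eassumption|])
  | (eapply lin_G41; [eassumption|]) | (eapply lin_G42; [eassumption|])
  | (eapply lin_G43; [eassumption|]) | (eapply lin_G44; [eassumption|])
  | eassumption ]).

Lemma act_mul v a b : A a -> A b -> act v (a * b) = act (act v a) b.
Proof.
move=> Aa Ab; rewrite !act_sw sw_mulR //; try by linT.
transitivity (sw a (fun p q => sw b (fun r s => S r * (S p * v * q) * s))).
  apply: swA_congr => //; try by linT.
  move=> p q Ap _; apply: swA_congr => //; try by linT.
  by move=> r s Ar _; rewrite S1 // !mulrA.
rewrite sw_swap; apply: sw_ext => r s.
by rewrite (@sw_push _ _ a _ (fun z => S r * z * s)) //; linT.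
Qed.

Notation swk := (@sw k^o).

Lemma act_V v a : V v -> A a -> V (act v a).
Proof.
move=> [ov pv] Aa; case: (Aa) => [t Et tE]; split.
  rewrite act_sw (sw_tensor Et); try by linT.
  rewrite (lin_sum (pr_lin true)); apply: eq_big_seq => p /tE [e1 e2].
  have h1 : pr true (S p.1 * v) = S p.1 * v.
    by have := pr_mul false true (S p.1) v; rewrite (E_S e1) ov.
  by have := pr_mul true false (S p.1 * v) p.2; rewrite h1 e2.
apply: te_sw => phi bphi L1 L2.
transitivity (swk a (fun p q => swk (S p * v * q) phi)).
  by rewrite act_sw (@sw_push _ _ a (fun p q => S p * v * q) (fun z => swk z phi)) //; linT.
transitivity (swk a (fun p q => swk p (fun e f => swk q (fun g h => phi (S e * v * g) (S f * h))) +
                              swk p (fun e f => swk q (fun g h => phi (S e * g) (S f * v * h))))).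
  apply: swA_congr => //; try by linT.
  move=> p q Ap Aq; rewrite sw_mulR //; try by linT.
  rewrite (sw_mulL _ (A_S Ap)); try by linT.
  transitivity (swk (S p) (fun e1 f1 => swk q (fun g h => phi (e1 * v * g) (f1 * 1 * h)) +
                                     swk q (fun g h => phi (e1 * 1 * g) (f1 * v * h)))).
    by apply: sw_ext => e1 f1; rewrite prim_sw //; linT.
  rewrite S2 //; try by linT.
  rewrite -sw_add; apply: sw_ext => e f; rewrite !mulr1.
  by rewrite -sw_add.
rewrite sw_add !big_cons big_nil /= addr0; congr (_ + _).
- rewrite (sw_mid_swap (K := fun e f g h => (phi (S e * v * g) (S f * h) : k^o))) //; try by linT.
  transitivity (swk a (fun p q => eps q *: swk p (fun e f => phi (S e * v * f) 1))).
    apply: sw_ext => p q; rewrite -sw_scale; apply: sw_ext => e f.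
    by rewrite (@sw_antL _ _ (fun z => (phi (S e * v * f) z : k^o))).
  rewrite (@sw_counitR _ a (fun z => swk z (fun e f => phi (S e * v * f) 1))); last by linT.
  by rewrite act_sw (@sw_push _ _ a (fun e f => S e * v * f) (fun z => (phi z 1 : k^o))) //; linT.
- rewrite (sw_mid_swap (K := fun e f g h => (phi (S e * g) (S f * v * h) : k^o))) //; try by linT.
  transitivity (swk a (fun p q => eps p *: swk q (fun g h => phi 1 (S g * v * h)))).
    apply: sw_ext => p q.
    by rewrite (@sw_antL _ _ (fun z => swk q (fun g h => phi z (S g * v * h)))) //; linT.
  rewrite (@sw_counitL _ a (fun z => swk z (fun g h => phi 1 (S g * v * h)))); last by linT.
  by rewrite act_sw (@sw_push _ _ a (fun e f => S e * v * f) (fun z => (phi 1 z : k^o))) //; linT.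
Qed.

Lemma sw_mulgen (Z : lmodType k) x y (F : H -> H -> Z) :
  (forall w, lin (fun y => F y w)) -> (forall w, lin (F w)) ->
  sw (x * y) F = sw x (fun a b => sw y (fun c d => \sum_(ij <- parities)
     (-1) ^+ (ij.1 && ij.2) *: F (a * pr ij.2 c) (pr ij.1 b * d))).
Proof. by move=> F1 F2; rewrite {1}/sw (bilsum (D_mul x y)) // stmul_sum. Qed.

Lemma scale_ko (a x : k) : (a *: (x : k^o)) = a * x. Proof. by []. Qed.

Lemma pr_true1 : pr true 1 = 0. Proof. exact: E_odd E1. Qed.

Lemma br_prim u v : V u -> V v -> primitive_on A D (anticomm u v).
Proof.
move=> [ou pu] [ov pv].
have eu := prE_odd ou; have ev := prE_odd ov.
have Ew : E (anticomm u v).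
  rewrite /E /anticomm (linD (pr_lin false)); congr (_ + _).
    by have := pr_mul true true u v; rewrite ou ov.
  by have := pr_mul true true v u; rewrite ou ov.
have De : tensor_eq (D (anticomm u v)) [:: (anticomm u v, 1); (1, anticomm u v)].
  apply: te_sw => phi bphi L1 L2.
  rewrite /anticomm (linD (sw_lin L1 L2)) !sw_mulgen //.
  rewrite !(prim_sw pu) /=; try by linT.
  rewrite !(prim_sw pv) /=; try by linT.
  rewrite !(prim_sw pu) /=; try by linT.
  rewrite !sum_par /= ou ov eu ev pr1 pr_true1 !mulr0 !mul0r !mulr1 !mul1r.
  rewrite !(bf0l bphi) !(bf0r bphi) !big_cons big_nil /= (linD (L1 1)) (linD (L2 1)).
  rewrite !scale_ko !expr0 !expr1.
  ring.
split => //; exists [:: (anticomm u v, 1); (1, anticomm u v)] => //.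
by move=> p; rewrite !inE => /orP [] /eqP -> /=; split => //; exact: E1.
Qed.

Lemma conv_act u v a :
  sw a (fun p q => act u p * act v q) = sw a (fun e q => S e * u * v * q).
Proof.
transitivity (sw a (fun p q => sw p (fun e f => sw q (fun g h => S e * u * f * (S g * v * h))))).
  apply: sw_ext => p q; rewrite act_sw.
  rewrite -(@sw_push _ _ p (fun e f => S e * u * f) (fun z => z * act v q)); last by linT.
  apply: sw_ext => e f; rewrite act_sw.
  by rewrite -(@sw_push _ _ q (fun g h => S g * v * h) (fun z => S e * u * f * z)); last by linT.
rewrite sw_assoc4; try by linT.
apply: sw_ext => e q.
transitivity (sw q (fun m h => eps m *: (S e * u * 1 * v * h))).
  apply: sw_ext => m h.
  rewrite -(@sw_antR _ _ (fun z => S e * u * z * v * h)); last by linT.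
  by apply: sw_ext => f g; rewrite !mulrA.
rewrite (@sw_counitL _ q (fun h => S e * u * 1 * v * h)); last by linT.
by rewrite mulr1.
Qed.

Lemma equivariance u v a : A a ->
  \sum_(p <- D a) anticomm (act u p.1) (act v p.2) = \sum_(p <- D a) S p.1 * anticomm u v * p.2.
Proof.
move=> Aa; change (sw a (fun p q => anticomm (act u p) (act v q)) =
  sw a (fun p q => S p * anticomm u v * q)).
rewrite /anticomm sw_add conv_act.
rewrite (sw_cocommA (F := fun p q => act v q * act u p)) //; try by linT.
rewrite conv_act -sw_add; apply: sw_ext => e q.
by rewrite mulrDr mulrDl !mulrA.
Qed.

Lemma act_brvv v : V v -> act v (anticomm v v) = 0.
Proof.
move=> Vv; have [_ pw] := br_prim Vv Vv; set w := anticomm v v in pw *.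
have e1 : eps w *: (1 : H) = 0.
  have := counitL w; rewrite -/(sw w (fun a b => eps a *: b)) prim_sw //; try by linT.
  by rewrite eps1 scale1r => /eqP; rewrite -subr_eq0 addrK => /eqP.
have Sw : S w = - w.
  have := antL w; rewrite -/(sw w (fun a b => S a * b)) prim_sw //; try by linT.
  by rewrite e1 S_one mulr1 mul1r => /eqP; rewrite addr_eq0 => /eqP.
rewrite act_sw prim_sw //; try by linT.
rewrite Sw S_one mulr1 mul1r /w /anticomm mulNr mulrDl mulrDr !mulrA.
by rewrite addNr.
Qed.

Lemma part1 : dual_HC_pair (even_part_sub pr D) D eps S (odd_prim pr D) (adj_act D S)
  (@anticomm k H).
Proof.
split; [|split; [|split; [|split; [|split; [|split; [|split]]]]]].
- split; last by move=> x Ax; apply: cocomm_flip.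
  split; last split; [|exact: A_S|split; [by move=> a x y _ _; apply: S_lin|split]].
  + split; [|split; [|split; [|split; [|split]]]].
    * split; first by split; [exact: A0|move=> a x y; exact: A_lin].
      by split; [exact: A1|move=> x y; exact: A_mul].
    * split; first by move=> x /A_rep [t [Et tA]]; exists t.
      split; first by move=> a x y _ _; apply: D_lin.
      split; first by move=> a x y _ _; apply: eps_lin.
      split; first by move=> x _; apply: coassoc.
      by split => x _; [apply: counitL|apply: counitR].
    * by move=> x y _ Ay; apply: D_mulA.
    * exact: D_1.
    * by move=> x y _ _; apply: eps_mul.
    * exact: eps1.
  + by move=> x _; apply: antL.
  + by move=> x _; apply: antR.
- split; first by split; [exact: V0|move=> a x y; exact: V_lin].
  split; first by move=> v a Vv Aa; apply: act_V.
  split; first by move=> c u v a _ _ _; apply: act_linv.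
  split; first by move=> c v a b _ _ _; apply: act_lina.
  split; first by move=> v _; apply: act_1.
  by move=> v a b _ Aa Ab; apply: act_mul.
- by move=> u v Vu Vv; apply: br_prim.
- move=> c u v w _ _ _; rewrite /anticomm mulrDl mulrDr -scalerAl -scalerAr scalerDr.
  by rewrite -!addrA; congr (_ + _); rewrite addrCA.
- move=> c u v w _ _ _; rewrite /anticomm mulrDl mulrDr -scalerAl -scalerAr scalerDr.
  by rewrite -!addrA; congr (_ + _); rewrite addrCA.
- by move=> u v a _ _ Aa; apply: equivariance.
- by move=> u v _ _; rewrite /anticomm addrC.
- by move=> v Vv; apply: act_brvv.
Qed.

End Hopf.


Section Morph.
Variables (k : fieldType) (H K : algType k) (prH : bool -> H -> H) (prK : bool -> K -> K)
  (DH : H -> seq (H * H)) (DK : K -> seq (K * K)) (eH : H -> k) (eK : K -> k)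
  (SH : H -> H) (SK : K -> K) (f : H -> K).
Hypotheses (hH : super_cocomm_hopf prH DH eH SH) (hK : super_cocomm_hopf prK DK eK SK)
  (hf : super_hopf_morph prH prK DH DK eH eK SH SK f).

Lemma f_lin : lin f. Proof. by case: hf => [[_ [fl _]] _] a x y; apply: fl. Qed.
Lemma f_1 : f 1 = 1. Proof. by case: hf => [[_ [_ [f1 _]]] _]. Qed.
Lemma f_mul x y : f (x * y) = f x * f y. Proof. by case: hf => [[_ [_ [_ [fm _]]]] _]; apply: fm. Qed.
Lemma f_D x : tensor_eq (DK (f x)) [seq (f p.1, f p.2) | p <- DH x].
Proof. by case: hf => [[_ [_ [_ [_ [fD _]]]]] _]; apply: fD. Qed.
Lemma f_pr i x : f (prH i x) = prK i (f x). Proof. by case: hf => _ fp; apply: fp. Qed.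
Lemma f_S x : f (SH x) = SK (f x). Proof. by case: hf => [[_ [_ [_ [_ [_ [_ fS]]]]]] _]; apply: fS. Qed.

Lemma te_map (s t : seq (H * H)) : tensor_eq s t ->
  tensor_eq [seq (f p.1, f p.2) | p <- s] [seq (f p.1, f p.2) | p <- t].
Proof.
move=> e phi [b1 b2]; rewrite !big_map /=.
by apply: (e (fun a b => phi (f a) (f b))); split => *; rewrite f_lin ?b1 ?b2.
Qed.

Lemma part2 : dual_HC_morph (even_part_sub prH DH) (even_part_sub prK DK) DH DK eH eK SH SK
  (odd_prim prH DH) (odd_prim prK DK) (adj_act DH SH) (adj_act DK SK)
  (@anticomm k H) (@anticomm k K) f f.
Proof.
have fl := f_lin.
split; [|split; [|split; [|split]]].
- case: hf => [[_ [fl' [f1 [fm [fD [fe fS]]]]]] _].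
  split; last first.
    split; first by move=> a x y _ _; apply: fl'.
    split; first by [].
    split; first by move=> x y _ _; apply: fm.
    split; first by move=> x _; apply: fD.
    by split => x _; [apply: fe|apply: fS].
  move=> x [t Et tE]; exists [seq (f p.1, f p.2) | p <- t].
    apply: te_trans; [exact: (fD x I)|exact: te_map Et].
  by move=> p /mapP [q /tE [e1 e2] ->] /=; rewrite -!f_pr e1 e2.
- move=> v [ov pv]; split; first by rewrite -f_pr ov.
  by apply: te_trans (f_D v) _; have := te_map pv; rewrite /= f_1.
- by move=> c u v _ _; apply: fl.
- move=> v a _ _; rewrite /adj_act (lin_sum fl).
  rewrite (@bilsum _ _ _ _ _ (f_D a) (fun x y => SK x * f v * y)); last 2 first.
  + by move=> w c x y; rewrite (S_lin hK) mulrDl mulrDl -!scalerAl.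
  + by move=> w c x y; rewrite mulrDr -scalerAr.
  by rewrite big_map; apply: eq_bigr => p _; rewrite !f_mul f_S.
- by move=> u v _ _; rewrite /anticomm (linD fl) !f_mul.
Qed.
End Morph.

Theorem proposition3p4 (k : fieldType) (char_ne2 : (2%:R : k) != 0) :
  (forall (H : algType k) (pr : bool -> H -> H) (Delta : H -> seq (H * H))
          (eps : H -> k) (S : H -> H),
     super_cocomm_hopf pr Delta eps S ->
     dual_HC_pair (even_part_sub pr Delta) Delta eps S
                  (odd_prim pr Delta) (adj_act Delta S) (@anticomm k H)) /\
  (forall (H K : algType k) (prH : bool -> H -> H) (prK : bool -> K -> K)
          (DH : H -> seq (H * H)) (DK : K -> seq (K * K))
          (eH : H -> k) (eK : K -> k) (SH : H -> H) (SK : K -> K) (f : H -> K),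
     super_cocomm_hopf prH DH eH SH ->
     super_cocomm_hopf prK DK eK SK ->
     super_hopf_morph prH prK DH DK eH eK SH SK f ->
     dual_HC_morph (even_part_sub prH DH) (even_part_sub prK DK) DH DK eH eK SH SK
                   (odd_prim prH DH) (odd_prim prK DK) (adj_act DH SH) (adj_act DK SK)
                   (@anticomm k H) (@anticomm k K) f f).
Proof.
split; first by move=> H pr Delta eps S hyp; exact: part1 hyp.
by move=> H K prH prK DH DK eH eK SH SK f hH hK hf; exact: part2 hK hf.
Qed.
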